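(* Let $\mathcal S$ be a trajectory set satisfying (nL), i.e. $\bar\sigma(0)\ge0$ holds in the shifted conditional space $\mathcal S^{(S,j)}$ for every $S\in\mathcal S$ and $j\in\mathbb N_0$. Then $\mathcal S$ satisfies (nK), i.e. for every $S\in\mathcal S$ and $j\in\mathbb N_0$ the shifted conditional space $\mathcal S^{(S,j)}$ satisfies (LOP) and (K).
   Context: Fix $s_0\in\mathbb R$. A trajectory set (with initial value $s_0$) is any set $\mathcal S$ of real sequences $S=(S_j)_{j\in\mathbb N_0}$ with $S_0=s_0$. All of the following notions are defined for an arbitrary trajectory set $\mathcal T$ (in place of $\mathcal S$). A simple portfolio $(V,n,H)$ consists of $V\in\mathbb R$, $n\in\mathbb N$ and nonanticipating functions $H_i:\mathcal T\to\mathbb R$, $0\le i\le n-1$ (i.e. $H_i(S)=h_i(S_0,\dots,S_i)$ for some arbitrary $h_i:\mathbb R^{i+1}\to\mathbb R$). Its wealth is $\Pi^{V,n,H}_j(S)=V+\sum_{i=0}^{\min\{j,n\}-1}H_i(S)(S_{i+1}-S_i)$ and $\Pi^{V,n,H}_\infty:=\Pi^{V,n,H}_n$; it is positive if $V\ge0$ and $\Pi^{V,n,H}_\infty\ge0$ on $\mathcal T$. A generalized portfolio is a sequence $(V_m,n_m,H_m)_{m\in\mathbb N_0}$ of simple portfolios, positive for every $m\ge1$; it is a positive generalized portfolio if moreover $\Pi^{V_0,n_0,H_0}_j\equiv0$ for all $j$. A map $f:\mathcal T\to[-\infty,+\infty]$ is superhedged with initial endowment $V=\sum_{m=0}^\infty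 V_m\in(-\infty,+\infty]$ by such a portfolio if $f\le\sum_{m=0}^\infty\Pi^{V_m,n_m,H_m}_\infty$ on $\mathcal T$. For $f\ge0$, $\bar I(f)$ is the infimum of initial endowments of positive generalized portfolios superhedging $f$; $\bar\sigma(f)$ is the infimum of initial endowments of generalized portfolios superhedging $f$. Let $\mathcal E=\{\Pi^{V,n,H}_\infty\}$ over all simple portfolios. (LOP): whenever two simple portfolios have equal terminal wealth $\Pi_\infty$ on all of $\mathcal T$, their initial endowments coincide; under (LOP), $I(\Pi^{V,n,H}_\infty):=V$ is well defined on $\mathcal E$. (K): $I(f)+\bar I(f^-)\le\bar I(f^+)$ for every $f\in\mathcal E$. For $S\in\mathcal S$, $j\in\mathbb N_0$, the conditional space is $\mathcal S_{(S,j)}=\{\tilde S\in\mathcal S:(\tilde S_0,\dots,\tilde S_j)=(S_0,\dots,S_j)\}$ and the shifted conditional space is $\mathcal S^{(S,j)}=\{(\tilde S_{j+i})_{i\in\mathbb N_0}:\tilde S\in\mathcal S_{(S,j)}\}$, a trajectory set with initial value $S_j$. *)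

(* Defs.v *)
From mathcomp Require Import all_boot all_order all_algebra.
From mathcomp Require Import all_classical all_reals all_analysis.
Set Implicit Arguments. Unset Strict Implicit. Unset Printing Implicit Defensive.
Import Order.TTheory GRing.Theory Num.Theory.
Local Open Scope classical_set_scope.
Local Open Scope ring_scope.

Section Trading.
Variable R : realType.

Definition rseq := nat -> R.

Definition prefix (S : rseq) (i : nat) : seq R := [seq S k | k <- iota 0 i.+1].

(* H_i(S) = h_i(S_0,...,S_i) with h_i an
   arbitrary function of the first i+1 values, so H is nonanticipating by
   construction.  n must be in N = {1,2,...} (see is_simple). *)
Record portfolio := Portfolio {
  pV : R;
  pn : nat;
  ph : nat -> seq R -> R }.

Definition is_simple (p : portfolio) : Prop := (0 < pn p)%N.

Definition H (p : portfolio) (i : nat) (S : rseq) : R := ph p i (prefix S i).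

Definition wealth (p : portfolio) (j : nat) (S : rseq) : R :=
  pV p + \sum_(0 <= i < minn j (pn p)) H p i S * (S i.+1 - S i).

Definition twealth (p : portfolio) (S : rseq) : R := wealth p (pn p) S.

Definition positive_pf (T : set rseq) (p : portfolio) : Prop :=
  0 <= pV p /\ forall S, T S -> 0 <= twealth p S.

Definition gen_portfolio (T : set rseq) (P : nat -> portfolio) : Prop :=
  (forall m, is_simple (P m)) /\ (forall m, (0 < m)%N -> positive_pf T (P m)).

Definition pos_gen_portfolio (T : set rseq) (P : nat -> portfolio) : Prop :=
  gen_portfolio T P /\ forall j S, T S -> wealth (P 0%N) j S = 0.

Definition endowment (P : nat -> portfolio) : \bar R :=
  (\sum_(0 <= m <oo) (pV (P m))%:E)%E.

Definition superhedges (T : set rseq) (P : nat -> portfolio)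
    (f : rseq -> \bar R) : Prop :=
  forall S, T S -> (f S <= \sum_(0 <= m <oo) (twealth (P m) S)%:E)%E.

Definition Ibar (T : set rseq) (f : rseq -> \bar R) : \bar R :=
  ereal_inf [set endowment P | P in
             [set P | pos_gen_portfolio T P /\ superhedges T P f]].

Definition sigmabar (T : set rseq) (f : rseq -> \bar R) : \bar R :=
  ereal_inf [set endowment P | P in
             [set P | gen_portfolio T P /\ superhedges T P f]].

Definition LOP (T : set rseq) : Prop :=
  forall p1 p2, is_simple p1 -> is_simple p2 ->
    (forall S, T S -> twealth p1 S = twealth p2 S) -> pV p1 = pV p2.

(* (K): for f = Pi^{V,n,H}_infty in E, I(f) = V. *)
Definition condK (T : set rseq) : Prop :=
  forall p, is_simple p ->
    ((pV p)%:E + Ibar T (fun S => (Num.max (- twealth p S) 0)%:E)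
       <= Ibar T (fun S => (Num.max (twealth p S) 0)%:E))%E.

Definition shifted_cond (T : set rseq) (S : rseq) (j : nat) : set rseq :=
  [set (fun i => S' (j + i)%N) | S' in
     [set S' | T S' /\ forall k, (k <= j)%N -> S' k = S k]].

Definition condnL (T : set rseq) : Prop :=
  forall S j, T S -> (0 <= sigmabar (shifted_cond T S j) (fun _ => 0%E))%E.

Definition condnK (T : set rseq) : Prop :=
  forall S j, T S -> LOP (shifted_cond T S j) /\ condK (shifted_cond T S j).

End Trading.

(* Main.v *)
Require Import Defs.
From mathcomp Require Import all_boot all_order all_algebra.
From mathcomp Require Import all_classical all_reals all_analysis.
From mathcomp.algebra_tactics Require Import ring lra.
From mathcomp Require Import zify.
Import Defs.
Import numFieldNormedType.Exports.
Set Implicit Arguments. Unset Strict Implicit. Unset Printing Implicit Defensive.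
Import Order.TTheory GRing.Theory Num.Theory.
Local Open Scope classical_set_scope.
Local Open Scope ring_scope.

Section Aux.
Variable R : realType.
Implicit Types (p : portfolio R) (S : rseq R).

Definition Htil p i S : R := if (i < pn p)%N then H p i S else 0.

Lemma wealth0 p S : wealth p 0 S = pV p.
Proof. by rewrite /wealth min0n big_geq // addr0. Qed.

Lemma wealthS p i S :
  wealth p i.+1 S = wealth p i S + Htil p i S * (S i.+1 - S i).
Proof.
rewrite /wealth /Htil; case: (ltnP i (pn p)) => hi.
  have e1 : minn i.+1 (pn p) = i.+1 by apply/minn_idPl.
  have e2 : minn i (pn p) = i by apply/minn_idPl; apply: ltnW.
  by rewrite e1 ?e2 big_nat_recr //= addrA.
have e1 : minn i.+1 (pn p) = pn p by apply/minn_idPr; apply: leq_trans hi _.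
have e2 : minn i (pn p) = pn p by apply/minn_idPr.
rewrite e1 ?e2.
by rewrite mul0r addr0.
Qed.

Lemma wealth_ge p j S : (pn p <= j)%N -> wealth p j S = twealth p S.
Proof. by move=> h; rewrite /twealth /wealth (minn_idPr h) minnn. Qed.

Definition agree S S' i := forall k, (k <= i)%N -> S' k = S k.

Lemma prefix_agree S S' i l : agree S S' i -> (l <= i)%N -> prefix S' l = prefix S l.
Proof.
move=> ag hl; apply/eq_in_map => k; rewrite mem_iota add0n => /andP[_ hk].
by apply: ag; apply: leq_trans hl.
Qed.

Lemma H_agree S S' i l p : agree S S' i -> (l <= i)%N -> H p l S' = H p l S.
Proof. by move=> ag hl; rewrite /H (prefix_agree ag hl). Qed.

Lemma Htil_agree S S' i l p : agree S S' i -> (l <= i)%N -> Htil p l S' = Htil p l S.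
Proof. by move=> ag hl; rewrite /Htil (H_agree _ ag hl). Qed.

Lemma wealth_agree S S' i j p : agree S S' i -> (j <= i)%N -> wealth p j S' = wealth p j S.
Proof.
move=> ag; elim: j => [|j IH] hj; first by rewrite !wealth0.
rewrite !wealthS IH ?(ltnW hj) // (Htil_agree _ ag (ltnW hj)).
by rewrite (ag j.+1 hj) (ag j (ltnW hj)).
Qed.

Definition shiftS S i : rseq R := fun k => S (i + k)%N.

Lemma prefix_shift S S' i l : agree S S' i ->
  prefix S' (i + l) = [seq S k | k <- iota 0 i] ++ prefix (shiftS S' i) l.
Proof.
move=> ag; rewrite /prefix -addnS iotaD map_cat; congr (_ ++ _).
  apply/eq_in_map => k; rewrite mem_iota add0n => /andP[_ hk].
  by apply: ag; apply: ltnW.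
by rewrite add0n -[in LHS](addn0 i) iotaDl -map_comp.
Qed.

Definition shiftp S i p : portfolio R :=
  Portfolio (wealth p i S) (pn p - i).+1
    (fun l x => if (i + l < pn p)%N then ph p (i + l) ([seq S k | k <- iota 0 i] ++ x)
                else 0).

Lemma shift_wealth S S' i p l : agree S S' i ->
  wealth (shiftp S i p) l (shiftS S' i) = wealth p (i + l) S'.
Proof.
move=> ag; elim: l => [|l IH].
  by rewrite wealth0 addn0 /= (wealth_agree p ag (leqnn i)).
rewrite wealthS IH addnS wealthS; congr (_ + _ * _).
  rewrite /Htil /H /=; case: (ltnP l (pn p - i).+1) => h0;
    case: (ltnP (i + l) (pn p)) => h1 //.
    by rewrite -prefix_shift.
  lia.
by rewrite /shiftS addnS.
Qed.


Lemma twealth_shift S S' i p : agree S S' i ->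
  twealth (shiftp S i p) (shiftS S' i) = twealth p S'.
Proof.
move=> ag; rewrite {1}/twealth shift_wealth //; apply: wealth_ge => /=; lia.
Qed.

Lemma eseries_recl (u : nat -> \bar R) (a : R) : u 0%N = a%:E ->
  (forall m, (0 <= u m.+1)%E) ->
  (\sum_(0 <= m <oo) u m = a%:E + \sum_(0 <= m <oo) u m.+1)%E.
Proof.
move=> u0 upos.
have cv : cvgn (fun n => (\sum_(0 <= m < n) u m.+1)%E).
  by apply: is_cvg_ereal_nneg_natsum => n _; apply: upos.
apply/cvg_lim => //; rewrite -cvg_shiftS /=.
have -> : (fun n => \sum_(0 <= m < n.+1) u m)%E =
          (fun _ => a%:E) \+ (fun n => \sum_(0 <= m < n) u m.+1)%E.
  apply/funext => n /=; rewrite big_nat_recl // u0; congr (_ + _)%E.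
apply: cvgeD; [exact: fin_num_adde_defr | exact: cvg_cst | exact: cv].
Qed.

Lemma esum_EFin (u : nat -> R) : cvgn (series u) ->
  (\sum_(0 <= m <oo) (u m)%:E)%E = (limn (series u))%:E.
Proof.
move=> cu; rewrite -EFin_lim //; congr (limn _); apply/funext => n /=.
by rewrite sumEFin.
Qed.

Lemma term_le_series (u : nat -> \bar R) k : (forall m, (0 <= u m)%E) ->
  (u k <= \sum_(0 <= m <oo) u m)%E.
Proof.
move=> u0; apply: le_trans (nneseries_lim_ge k.+1 _); last by move=> n _ _; apply: u0.
rewrite big_nat_recr //=; apply: leeDr; apply: sume_ge0 => m _; exact: u0.
Qed.


Definition zerop : portfolio R := Portfolio 0 1 (fun _ _ => 0).

Lemma Htil_zerop i S : Htil zerop i S = 0.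
Proof. by rewrite /Htil /H /=; case: ifP. Qed.

Lemma wealth_zerop j S : wealth zerop j S = 0.
Proof. by elim: j => [|j IH]; rewrite ?wealth0 // wealthS IH Htil_zerop mul0r addr0. Qed.

Lemma nL_node (U : set (rseq R)) S i (nL : condnL U) (US : U S) A
    (P : nat -> portfolio R) :
  (forall m, 0 <= wealth (P m) i S) ->
  (forall S', U S' -> agree S S' i -> forall m, 0 <= twealth (P m) S') ->
  (forall S', U S' -> agree S S' i ->
     (0 <= (twealth A S')%:E + \sum_(0 <= m <oo) (twealth (P m) S')%:E)%E) ->
  (0 <= (wealth A i S)%:E + \sum_(0 <= m <oo) (wealth (P m) i S)%:E)%E.
Proof.
move=> Pi Pt hA.
pose P' m := if m is m'.+1 then shiftp S i (P m') else shiftp S i A.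
have -> : ((wealth A i S)%:E + \sum_(0 <= m <oo) (wealth (P m) i S)%:E)%E
          = endowment P'.
  rewrite /endowment [RHS](@eseries_recl _ (wealth A i S)) //.
apply: le_trans (nL S i US) _.
apply: ereal_inf_lbound; exists P' => //; split.
  split; first by move=> [|m].
  move=> [|m] // _; split; first exact: Pi.
  by move=> x [S' [US' ag] <-]; rewrite /= twealth_shift //; apply: Pt.
move=> x [S' [US' ag] <-].
rewrite (@eseries_recl _ (twealth A S')) /=; first last.
- by move=> m; rewrite lee_fin twealth_shift //; apply: Pt.
- by rewrite twealth_shift.
have -> : (\sum_(0 <= m <oo) (twealth (shiftp S i (P m)) (shiftS S' i))%:E)%E
  = (\sum_(0 <= m <oo) (twealth (P m) S')%:E)%E.
  by congr (limn _); apply/funext => n; apply: eq_bigr => m _; rewrite twealth_shift.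
exact: hA.
Qed.


Lemma eseries_zero : (\sum_(0 <= m <oo) (0:R)%:E = 0)%E.
Proof. by apply: eseries0. Qed.

Lemma nL_node1 (U : set (rseq R)) S i (nL : condnL U) (US : U S) A :
  (forall S', U S' -> agree S S' i -> 0 <= twealth A S') -> 0 <= wealth A i S.
Proof.
move=> hA.
have z1 : forall j T, (\sum_(0 <= m <oo) (wealth zerop j T)%:E)%E = 0%E.
  move=> j T; rewrite (_ : (fun n => _) = fun _ => 0%E) ?lim_cst //.
  by apply/funext => n; rewrite big1 // => m _; rewrite wealth_zerop.
have := @nL_node U S i nL US A (fun _ => zerop).
rewrite z1 adde0 lee_fin; apply.
- by move=> m; rewrite wealth_zerop.
- by move=> S' _ _ m; rewrite /twealth wealth_zerop.
move=> S' US' ag.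
by rewrite /twealth z1 adde0 lee_fin; apply: hA.
Qed.

Definition diffp (p2 p1 : portfolio R) : portfolio R :=
  Portfolio (pV p2 - pV p1) (maxn (pn p1) (pn p2))
    (fun i x => (if (i < pn p2)%N then ph p2 i x else 0)
              - (if (i < pn p1)%N then ph p1 i x else 0)).

Lemma wealth_diffp p2 p1 j S :
  wealth (diffp p2 p1) j S = wealth p2 j S - wealth p1 j S.
Proof.
elim: j => [|j IH]; first by rewrite !wealth0.
rewrite !wealthS IH.
have -> : Htil (diffp p2 p1) j S = Htil p2 j S - Htil p1 j S.
  rewrite /Htil /H /=; case: ifP => hj //.
  move/negbT: hj; rewrite -leqNgt geq_max => /andP[h1 h2].
  by rewrite !ifF ?subr0 // ltnNge ?h1 ?h2.
ring.
Qed.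

Lemma twealth_diffp p2 p1 S :
  twealth (diffp p2 p1) S = twealth p2 S - twealth p1 S.
Proof.
by rewrite /twealth wealth_diffp /= -!/(twealth _ _) !wealth_ge // ?leq_maxl ?leq_maxr.
Qed.

Lemma LOP_of (U : set (rseq R)) (nL : condnL U) (ne : exists S, U S) : LOP U.
Proof.
move=> p1 p2 _ _ heq; case: ne => S US.
have h1 : 0 <= wealth (diffp p2 p1) 0 S.
  by apply: (nL_node1 nL US) => S' US' _; rewrite twealth_diffp heq // subrr.
have h2 : 0 <= wealth (diffp p1 p2) 0 S.
  by apply: (nL_node1 nL US) => S' US' _; rewrite twealth_diffp heq // subrr.
rewrite !wealth0 /= in h1 h2; lra.
Qed.


Lemma shifted_shifted (T : set (rseq R)) S0 j0 Ss i :
  T Ss -> agree S0 Ss j0 ->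
  shifted_cond (shifted_cond T S0 j0) (shiftS Ss j0) i = shifted_cond T Ss (j0 + i).
Proof.
move=> TSs agS; apply/seteqP; split => x.
  case=> S' [[S'' [TS'' ag''] eS'] agS'] <-.
  exists S''.
    split => // k hk; case: (leqP k j0) => hk0.
      by rewrite ag'' // agS.
    have -> : k = (j0 + (k - j0))%N by lia.
    have -> : S'' (j0 + (k - j0))%N = S' (k - j0)%N by rewrite -eS'.
    by rewrite agS' //; lia.
  by apply/funext => k; rewrite -eS' /shiftS addnA.
case=> S'' [TS'' ag] <-.
exists (shiftS S'' j0).
  split.
    exists S'' => //; split => // k hk.
    by rewrite ag ?agS //; lia.
  by move=> k hk; rewrite /shiftS ag //; lia.
by apply/funext => k; rewrite /shiftS addnA.
Qed.

Lemma condnL_shift (T : set (rseq R)) S0 j0 :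
  condnL T -> condnL (shifted_cond T S0 j0).
Proof.
move=> nL S i [Ss [TSs agS] <-].
rewrite shifted_shifted //; exact: nL.
Qed.


Lemma series_step (a b : nat -> R) c A : (forall m, 0 <= a m) ->
  (\sum_(0 <= m <oo) (a m)%:E = A%:E)%E ->
  (\sum_(0 <= m <oo) (`|b m|)%:E < +oo)%E ->
  (\sum_(0 <= m <oo) (a m + b m * c)%:E = (A + limn (series b) * c)%:E)%E.
Proof.
move=> a0 hA hb.
have ca : cvgn (series a) by apply: nnseries_is_cvg => //; rewrite hA ltry.
have eA : A = limn (series a) by move: hA; rewrite esum_EFin // => -[].
have cb : cvgn (series b).
  by apply: normed_cvg; apply: (@nnseries_is_cvg _ (fun n => `|b n|)).
have e : series (fun m => a m + b m * c) = (fun n => series a n + series b n * c).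
  by apply/funext => n; rewrite /series /= big_split /= mulr_suml.
have cc : series (fun m => a m + b m * c) @ \oo -->
          limn (series a) + limn (series b) * c.
  rewrite e; apply: cvgD; [exact: ca | apply: cvgMr_tmp; exact: cb].
rewrite esum_EFin; last by apply/cvg_ex; eexists; exact: cc.
by rewrite (cvg_lim _ cc) // eA.
Qed.

Definition constp (c : R) : portfolio R := Portfolio c 1 (fun _ _ => 0).

Lemma wealth_constp c j S : wealth (constp c) j S = c.
Proof.
elim: j => [|j IH]; rewrite ?wealth0 // wealthS IH.
by rewrite /Htil /H /=; case: ifP; rewrite mul0r addr0.
Qed.

Definition path_of (x : seq R) : rseq R := fun k => nth 0 x k.

Lemma path_of_agree S i : agree S (path_of (prefix S i)) i.
Proof.
move=> k hk; rewrite /path_of /prefix (nth_map 0%N) ?size_iota //.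
by rewrite nth_iota.
Qed.

Lemma agree_le S S' i l : agree S S' i -> (l <= i)%N -> agree S S' l.
Proof. by move=> ag hl k hk; apply: ag; apply: leq_trans hl. Qed.

Lemma agree_sym S S' i : agree S S' i -> agree S' S i.
Proof. by move=> ag k hk; rewrite ag. Qed.

Lemma agree_trans S S' S'' i : agree S S' i -> agree S' S'' i -> agree S S'' i.
Proof. by move=> a1 a2 k hk; rewrite a2 // a1. Qed.


End Aux.

Section KS.
Variable R : realType.
Variables (U : set (rseq R)) (nL : condnL U) (p : portfolio R) (Q : nat -> portfolio R)
  (e : R).
Hypothesis psimple : is_simple p.
Hypothesis Qpos : pos_gen_portfolio U Q.
Hypothesis Qsup : superhedges U Q (fun S => (Num.max (twealth p S) 0)%:E).
Hypothesis He : endowment Q = e%:E.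

Implicit Types (S : rseq R).

Definition sumW i S : \bar R := (\sum_(0 <= m <oo) (wealth (Q m) i S)%:E)%E.
Definition good i S : Prop := (\sum_(0 <= m <oo) (`|Htil (Q m) i S|)%:E < +oo)%E.
Definition Bad i S : Prop := exists l, (l < i)%N /\ ~ good l S /\ S l.+1 <> S l.
Definition H1 i S : R :=
  if `[< ~ Bad i S /\ good i S >] then limn (series (fun m => Htil (Q m) i S)) - Htil p i S
  else 0.
Definition R1 : portfolio R := Portfolio (e - pV p) (pn p) (fun i x => H1 i (path_of x)).
Definition sigma i S : R :=
  if `[< forall S', U S' -> agree S S' i -> S' i <= S' i.+1 >] then 1
  else if `[< forall S', U S' -> agree S S' i -> S' i.+1 <= S' i >] then -1 else 0.
Definition G (k : nat) : portfolio R :=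
  Portfolio 0 (pn p) (fun i x => k%:R * sigma i (path_of x)).
Definition Rf (m : nat) : portfolio R :=
  match m with 0%N => zerop R | 1%N => R1 | k.+2 => G k end.

Lemma good_agree S S' i : agree S S' i -> good i S' = good i S.
Proof.
move=> ag; rewrite /good; congr (_ < _)%E; congr (limn _); apply/funext => n.
by apply: eq_bigr => m _; rewrite (Htil_agree _ ag (leqnn i)).
Qed.

Lemma Bad_agree S S' i : agree S S' i -> Bad i S' = Bad i S.
Proof.
move=> ag; apply: propext; split => -[l [hl [hg hd]]]; exists l; split => //.
  rewrite -(good_agree (agree_le ag (ltnW hl))); split => //.
  by rewrite -!ag // ltnW.
rewrite (good_agree (agree_le ag (ltnW hl))); split => //.
by rewrite !ag // ltnW.
Qed.

Lemma H1_agree S S' i : agree S S' i -> H1 i S' = H1 i S.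
Proof.
by move=> ag; rewrite /H1 (Bad_agree ag) (good_agree ag) (Htil_agree _ ag (leqnn i))
  (_ : series _ = series (fun m => Htil (Q m) i S)) //; apply/funext => n;
  apply: eq_bigr => m _; rewrite (Htil_agree _ ag (leqnn i)).
Qed.

Lemma sigma_agree S S' i : agree S S' i -> sigma i S' = sigma i S.
Proof.
move=> ag; rewrite /sigma.
have E1 : forall P : rseq R -> Prop,
  (forall S'', U S'' -> agree S' S'' i -> P S'') = (forall S'', U S'' -> agree S S'' i -> P S'').
  move=> P; apply: propext; split => h S'' US'' ag''; apply: h => //.
    exact: agree_trans (agree_sym ag) ag''.
  exact: agree_trans ag ag''.
by rewrite !E1.
Qed.

Lemma H_R1 i S : H R1 i S = H1 i S.
Proof. by rewrite /H /= (H1_agree (@path_of_agree R S i)). Qed.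

Lemma H_G k i S : H (G k) i S = k%:R * sigma i S.
Proof. by rewrite /H /= (sigma_agree (@path_of_agree R S i)). Qed.


Lemma le_sub0 (x : R) (y : \bar R) : ((x%:E <= y) <-> (0 <= (-x)%:E + y))%E.
Proof. by rewrite addeC EFinN sube_ge0. Qed.

Lemma Qtw_pos m S : U S -> 0 <= twealth (Q m) S.
Proof.
move=> US; case: m => [|m].
  by rewrite /twealth Qpos.2.
by have [_ h] := Qpos.1.2 m.+1 isT; apply: h.
Qed.

Lemma Wm_pos m i S : U S -> 0 <= wealth (Q m) i S.
Proof. by move=> US; apply: (nL_node1 nL US) => S' US' _; apply: Qtw_pos. Qed.

Lemma Qsup' S : U S -> ((twealth p S)%:E <= \sum_(0 <= m <oo) (twealth (Q m) S)%:E)%E.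
Proof. by move=> US; apply: le_trans (Qsup US); rewrite lee_fin le_max lexx. Qed.

Lemma sumW_ge i S : U S -> ((wealth p i S)%:E <= sumW i S)%E.
Proof.
move=> US.
have := @nL_node R U S i nL US (diffp (zerop R) p) Q.
rewrite wealth_diffp wealth_zerop sub0r -le_sub0; apply.
- by move=> m; apply: Wm_pos.
- by move=> S' US' _ m; apply: Qtw_pos.
move=> S' US' _; rewrite twealth_diffp /twealth wealth_zerop sub0r -le_sub0.
exact: Qsup'.
Qed.

Lemma sumW_n S : U S -> ((Num.max (twealth p S) 0)%:E <= sumW (pn p) S)%E.
Proof.
move=> US.
have := @nL_node R U S (pn p) nL US (constp (- Num.max (twealth p S) 0)) Q.
rewrite wealth_constp -le_sub0; apply.
- by move=> m; apply: Wm_pos.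
- by move=> S' US' _ m; apply: Qtw_pos.
move=> S' US' ag.
have -> : twealth (constp (- Num.max (twealth p S) 0)) S' = - Num.max (twealth p S) 0.
  by rewrite /twealth wealth_constp.
rewrite -le_sub0.
have -> : twealth p S = twealth p S' by rewrite /twealth (wealth_agree _ ag (leqnn _)).
exact: Qsup.
Qed.


Lemma Bad0 S : ~ Bad 0 S.
Proof. by case=> l []. Qed.

Lemma BadS i S : Bad i S -> Bad i.+1 S.
Proof. by case=> l [hl h]; exists l; split => //; apply: ltnW. Qed.

Lemma notBadS i S : ~ Bad i S -> good i S -> ~ Bad i.+1 S.
Proof.
move=> nB g [l [hl [ng hd]]]; move: hl; rewrite ltnS leq_eqVlt => /orP[/eqP el|hl].
  by subst l.
by apply: nB; exists l.
Qed.

Lemma notBadS' i S : ~ Bad i.+1 S -> ~ Bad i S /\ (good i S \/ S i.+1 = S i).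
Proof.
move=> nB1; split; first by move=> /BadS.
case: (pselect (good i S)) => g; first by left.
case: (pselect (S i.+1 = S i)) => d; first by right.
by exfalso; apply: nB1; exists i.
Qed.

Lemma sumW0 S : sumW 0 S = e%:E.
Proof.
rewrite -He /sumW /endowment; congr (limn _); apply/funext => n.
by apply: eq_bigr => m _; rewrite wealth0.
Qed.

Lemma wealth_R1S i S : (i < pn p)%N ->
  wealth R1 i.+1 S = wealth R1 i S + H1 i S * (S i.+1 - S i).
Proof. by move=> hi; have hi2 : (i < pn R1)%N := hi; rewrite wealthS /Htil hi2 H_R1. Qed.

Lemma inv S : U S -> forall i, (i <= pn p)%N ->
  (~ Bad i S -> sumW i S = (wealth R1 i S + wealth p i S)%:E) /\ 0 <= wealth R1 i S.
Proof.
move=> US; elim => [_|i IH hi].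
  split; first by move=> _; rewrite sumW0 !wealth0 /= subrK.
  rewrite wealth0 /=; have := sumW_ge 0 US; rewrite sumW0 wealth0 lee_fin.
  by rewrite subr_ge0.
have [IH1 IH2] := IH (ltnW hi).
rewrite wealth_R1S //.
have eS : sumW i.+1 S = (\sum_(0 <= m <oo)
    (wealth (Q m) i S + Htil (Q m) i S * (S i.+1 - S i))%:E)%E.
  by congr (limn _); apply/funext => n; apply: eq_bigr => m _; rewrite wealthS.
rewrite /H1; case: asboolP => [[nB g]|nh].
  have nB1 := notBadS nB g.
  have eq1 : sumW i.+1 S = (wealth R1 i S + wealth p i S +
      limn (series (fun m => Htil (Q m) i S)) * (S i.+1 - S i))%:E.
    rewrite eS; apply: series_step => //.
      by move=> m; apply: Wm_pos.
    exact: IH1.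
  split.
    by move=> _; rewrite eq1 wealthS; congr EFin; ring.
  have := sumW_ge i.+1 US; rewrite eq1 wealthS lee_fin.
  set L := limn _; set d := S i.+1 - S i; set hp := Htil p i S.
  move=> h; rewrite mulrBl; lra.
rewrite mul0r addr0; split => // nB1.
have [nB [g|d0]] := notBadS' nB1.
  by exfalso; apply: nh; split.
rewrite eS wealthS d0 subrr mulr0 addr0 -IH1 //.
by congr (limn _); apply/funext => n; apply: eq_bigr => m _; rewrite mulr0 addr0.
Qed.


Lemma agree_refl S i : agree S S i.
Proof. by []. Qed.

Lemma sigma_nonneg i S : U S -> 0 <= sigma i S * (S i.+1 - S i).
Proof.
move=> US; rewrite /sigma; case: asboolP => h1.
  by rewrite mul1r subr_ge0; apply: h1.
case: asboolP => h2; last by rewrite mul0r.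
by rewrite mulN1r oppr_ge0 subr_le0; apply: h2.
Qed.

Lemma twealth_G k S :
  twealth (G k) S = \sum_(0 <= i < pn p) k%:R * (sigma i S * (S i.+1 - S i)).
Proof.
rewrite /twealth /wealth minnn [pV _]/= add0r; apply: eq_bigr => i _.
by rewrite H_G mulrA.
Qed.

Lemma twealth_G_ge0 k S : U S -> 0 <= twealth (G k) S.
Proof.
move=> US; rewrite twealth_G; apply: sumr_ge0 => i _.
by apply: mulr_ge0 => //; apply: sigma_nonneg.
Qed.

Lemma twealth_G_ge k S l : U S -> (l < pn p)%N ->
  k%:R * (sigma l S * (S l.+1 - S l)) <= twealth (G k) S.
Proof.
move=> US hl; rewrite twealth_G (bigD1_seq l) /= ?mem_index_iota ?iota_uniq //.
rewrite lerDl; apply: sumr_ge0 => i _.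
by apply: mulr_ge0 => //; apply: sigma_nonneg.
Qed.

Lemma Bad_first i S : Bad i S ->
  exists l, (l < i)%N /\ ~ Bad l S /\ ~ good l S /\ S l.+1 <> S l.
Proof.
elim: i => [/Bad0 []|i IH hB].
case: (pselect (Bad i S)) => hBi.
  by have [l [hl rest]] := IH hBi; exists l; split => //; apply: leqW.
case: hB => l [hl [ng hd]]; exists l; split => //.
move: hl; rewrite ltnS leq_eqVlt => /orP[/eqP el|hl].
  by subst l.
by exfalso; apply: hBi; exists l.
Qed.

Lemma abs_bound (w h a b : R) : 0 <= w -> a < 0 -> 0 < b ->
  0 <= w + h * a -> 0 <= w + h * b -> `|h| <= ((b - a) / (b * - a)) * w.
Proof.
move=> w0 a0 b0 ha hb.
have K0 : 0 < b * - a by apply: mulr_gt0; rewrite // oppr_gt0.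
rewrite mulrAC ler_pdivlMr //.
case: (lerP 0 h) => hh.
  by rewrite ger0_norm //; nra.
by rewrite ltr0_norm //; nra.
Qed.

Lemma good_of S l : U S -> ~ Bad l S -> (l <= pn p)%N -> sigma l S = 0 -> good l S.
Proof.
move=> US nB hl; rewrite /sigma; case: asboolP => h1.
  by move/eqP; rewrite oner_eq0.
case: asboolP => h2.
  by move/eqP; rewrite oppr_eq0 oner_eq0.
move=> _.
move/existsNP: h1 => [S1 /not_implyP [US1 /not_implyP [ag1 /negP]]].
rewrite -ltNge => lt1.
move/existsNP: h2 => [S2 /not_implyP [US2 /not_implyP [ag2 /negP]]].
rewrite -ltNge => lt2.
have [h _] := inv US hl; have eW := h nB.
set a := S1 l.+1 - S1 l; set b := S2 l.+1 - S2 l.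
have a0 : a < 0 by rewrite /a subr_lt0.
have b0 : 0 < b by rewrite /b subr_gt0.
have bnd : forall m, `|Htil (Q m) l S| <= ((b - a) / (b * - a)) * wealth (Q m) l S.
  move=> m; apply: abs_bound => //.
  - exact: Wm_pos.
  - have := Wm_pos m l.+1 US1.
    by rewrite wealthS (wealth_agree _ ag1 (leqnn l)) (Htil_agree _ ag1 (leqnn l)).
  - have := Wm_pos m l.+1 US2.
    by rewrite wealthS (wealth_agree _ ag2 (leqnn l)) (Htil_agree _ ag2 (leqnn l)).
rewrite /good.
apply: (@le_lt_trans _ _ (((b - a) / (b * - a))%:E * sumW l S)%E).
  rewrite /sumW -nneseriesZl; last by move=> m _; rewrite lee_fin; apply: Wm_pos.
  apply: lee_nneseries => m _; first by rewrite lee_fin.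
  by rewrite -EFinM lee_fin.
by rewrite eW -EFinM ltry.
Qed.

Lemma bad_sigma S l : U S -> (l < pn p)%N -> ~ Bad l S -> ~ good l S ->
  S l.+1 <> S l -> 0 < sigma l S * (S l.+1 - S l).
Proof.
move=> US hl nB ng hd; have := sigma_nonneg l US.
case: (eqVneq (sigma l S) 0) => hs.
  by exfalso; apply: ng; apply: good_of => //; apply: ltnW.
rewrite le_eqVlt => /orP[|//] /eqP h0; exfalso.
move: h0 => /esym /eqP; rewrite mulf_eq0 (negbTE hs) /= subr_eq0 => /eqP.
exact: hd.
Qed.

Lemma Rf_tw_pos m S : U S -> 0 <= twealth (Rf m) S.
Proof.
move=> US; case: m => [|[|k]] /=.
- by rewrite /twealth wealth_zerop.
- by have [_ h] := inv US (leqnn (pn p)).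
- exact: twealth_G_ge0.
Qed.

Lemma Rf_sup S : U S ->
  ((Num.max (- twealth p S) 0)%:E <= \sum_(0 <= m <oo) (twealth (Rf m) S)%:E)%E.
Proof.
move=> US.
have tpos : forall m, (0 <= (twealth (Rf m) S)%:E)%E.
  by move=> m; rewrite lee_fin; apply: Rf_tw_pos.
case: (pselect (Bad (pn p) S)) => hB.
  have [l [hl [nB [ng hd]]]] := Bad_first hB.
  have hpos := bad_sigma US hl nB ng hd.
  set c := sigma l S * (S l.+1 - S l) in hpos.
  set x := Num.max (- twealth p S) 0.
  have x0 : 0 <= x by rewrite /x le_max lexx orbT.
  set k := (Num.Def.trunc (x / c)).+1.
  apply: le_trans (term_le_series k.+2 tpos); rewrite lee_fin /=.
  apply: le_trans (twealth_G_ge k US hl).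
  have := truncnS_gt (x / c); rewrite -/k ltr_pdivrMr // => h.
  exact: ltW.
have [h1 h2] := inv US (leqnn _).
have := sumW_n US; rewrite (h1 hB) lee_fin => hmax.
apply: le_trans (term_le_series 1 tpos); rewrite lee_fin /=.
have : 0 <= Num.max (twealth p S) 0 by rewrite le_max lexx orbT.
move: hmax; rewrite /twealth -/(twealth p S) => hmax h0.
have : 0 <= wealth R1 (pn p) S + twealth p S := le_trans h0 hmax.
rewrite ge_max h2 andbT; rewrite /twealth /=.
move=> hh; rewrite -/(twealth p S); lra.
Qed.


Lemma endow_Rf S0 : U S0 -> endowment Rf = (e - pV p)%:E.
Proof.
move=> US0.
have ep : 0 <= e - pV p.
  by have [_ h] := inv US0 (leq0n _); move: h; rewrite wealth0.
rewrite /endowment (@eseries_recl R _ 0) //; last first.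
  by move=> [|m] //=; rewrite lee_fin.
rewrite add0e (@eseries_recl R _ (e - pV p)) //.
have -> : (\sum_(0 <= m <oo) (pV (Rf m.+2))%:E)%E = 0%E.
  rewrite (_ : (fun n => _) = fun _ => 0%E) ?lim_cst //.
  by apply/funext => n; rewrite big1.
by rewrite adde0.
Qed.

Lemma pos_Rf S0 : U S0 -> pos_gen_portfolio U Rf.
Proof.
move=> US0; split; last by move=> j S _; rewrite wealth_zerop.
split; first by move=> [|[|k]] //=.
move=> [|[|k]] // _; split => /=.
- by have [_ h] := inv US0 (leq0n _); move: h; rewrite wealth0.
- by move=> S US; apply: (Rf_tw_pos 1 US).
- by [].
- by move=> S US; apply: (Rf_tw_pos k.+2 US).
Qed.

Lemma K_main S0 : U S0 ->
  (Ibar U (fun S => (Num.max (- twealth p S) 0)%:E) <= (e - pV p)%:E)%E.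
Proof.
move=> US0; rewrite -(endow_Rf US0).
apply: ereal_inf_lbound; exists Rf => //; split; first exact: pos_Rf US0.
by move=> S US; apply: Rf_sup.
Qed.

End KS.

Lemma condK_of (R : realType) (U : set (rseq R)) (nL : condnL U)
  (ne : exists S, U S) : condK U.
Proof.
case: ne => S0 US0 p ps.
apply: le_ereal_inf_tmp => _ [Q [Qpg Qsup] <-].
have E0 : (0 <= endowment Q)%E.
  apply: nneseries_ge0 => -[|m] _ _; rewrite lee_fin.
    by rewrite -(wealth0 (Q 0%N) S0) Qpg.2.
  by have [h _] := Qpg.1.2 m.+1 isT.
case E: (endowment Q) E0 => [e| |] // _; last by rewrite leey.
have := K_main nL ps Qpg Qsup E US0.
move=> /(leeD2l (pV p)%:E); rewrite -EFinD.
by have -> : pV p + (e - pV p) = e by ring.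
Qed.

Theorem theorem5p1 (R : realType) (s0 : R) (T : set (rseq R)) :
  (forall S, T S -> S 0%N = s0) ->
  condnL T -> condnK T.
Proof.
move=> _ nL S j TS.
have nL' := @condnL_shift R T S j nL.
have ne : exists S', shifted_cond T S j S'.
  by exists (shiftS S j); exists S.
split; [exact: LOP_of | exact: condK_of].
Qed.
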